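(* Let $\mu$ be a log-concave probability measure on $\mathbb{R}$ with density $f$, and let $M=\|f\|_\infty$. Then $$\Gamma(\mu)=2M.$$
   Context: A probability measure on $\mathbb{R}$ is log-concave if it has a density $f$ with $\ln f$ concave. For an interval $I=[a,b]$, $\mu^+(\partial I)=\liminf_{\epsilon\to0^+}\frac{\mu([a-\epsilon,b+\epsilon])-\mu([a,b])}{\epsilon}$, and $\Gamma(\mu)=\sup\{\mu^+(\partial I): I=[a,b]\subset\mathbb{R},\ a<b\}$. *)

(* Defs.v *)
From HB Require Import structures.
From mathcomp Require Import all_boot all_order all_algebra.
From mathcomp Require Import all_classical all_reals all_analysis ess_sup_inf.
Set Implicit Arguments. Unset Strict Implicit. Unset Printing Implicit Defensive.
Import Order.TTheory GRing.Theory Num.Theory.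
Import numFieldNormedType.Exports.
Local Open Scope classical_set_scope.
Local Open Scope ring_scope.

Section defs.
Context {R : realType}.

(* ln f is concave as an extended-real function (ln 0 = -oo):
   the support {f > 0} is convex and ln f is concave on it. *)
Definition log_concave (f : R -> R) : Prop :=
  forall x y t, 0 < f x -> 0 < f y -> 0 <= t <= 1 ->
    0 < f (t * x + (1 - t) * y) /\
    t * ln (f x) + (1 - t) * ln (f y) <= ln (f (t * x + (1 - t) * y)).

Definition log_concave_prob_density (f : R -> R) : Prop :=
  [/\ measurable_fun [set: R] f,
      (forall x, 0 <= f x),
      (\int[lebesgue_measure]_(x in [set: R]) (f x)%:E = 1)%E
    & log_concave f].

Definition dmeasure (f : R -> R) (A : set R) : \bar R :=
  (\int[lebesgue_measure]_(x in A) (f x)%:E)%E.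

(* mu^+(partial [a,b]) = liminf_{e -> 0+} (mu([a-e,b+e]) - mu([a,b])) / e,
   with liminf written out as sup_{d>0} inf_{0<e<d}. *)
Definition boundary_measure (f : R -> R) (a b : R) : \bar R :=
  (ereal_sup [set ereal_inf
     [set (dmeasure f `[(a - e)%R, (b + e)%R] - dmeasure f `[a, b])%E
            * ((e : R)^-1)%:E
       | e in `]0%R, (d : R)[] | d in `]0%R, +oo[])%E.

Definition Gamma (f : R -> R) : \bar R :=
  ereal_sup [set v | exists a b : R, a < b /\ v = boundary_measure f a b].

Definition Linfty_norm (f : R -> R) : \bar R :=
  ess_sup lebesgue_measure (fun x => (`|f x|)%:E).

End defs.

(* Main.v *)
Require Import Defs.
From HB Require Import structures.
From mathcomp Require Import all_boot all_order all_algebra.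
From mathcomp Require Import all_classical all_reals all_analysis ess_sup_inf.
From mathcomp Require Import lra ring measurable_realfun.
Set Implicit Arguments. Unset Strict Implicit. Unset Printing Implicit Defensive.
Import Order.TTheory GRing.Theory Num.Theory.
Import numFieldNormedType.Exports.
Local Open Scope classical_set_scope.
Local Open Scope ring_scope.

Section helpers.
Context {R : realType}.
Implicit Types f : R -> R.

Definition C (a b e : R) : set R := `[a - e, a[%classic `|` `]b, b + e]%classic.

Lemma C_meas a b e : measurable (C a b e).
Proof. by apply: measurableU. Qed.

Lemma setE_dec a b e : a <= b -> 0 <= e ->
  `[a - e, b + e]%classic = `[a, b]%classic `|` C a b e.
Proof.
move=> ab e0; apply/seteqP; split => x /=; rewrite /C /= !in_itv /=.
- move=> /andP[h1 h2].
  have [xa|ax] := ltP x a; first by rewrite ?h1 ?h2 ?andbT; auto.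
  have [bx|xb] := ltP b x; first by rewrite ?h1 ?h2 ?andbT; auto.
  by left.
- case=> [|[]] /andP[h1 h2].
  + by rewrite (le_trans _ h1) ?(le_trans h2) ?lerDl ?gerBl.
  + by rewrite h1 /= (le_trans (ltW h2)) // (le_trans ab) ?lerDl.
  + by rewrite h2 andbT (le_trans _ (ltW h1)) // (le_trans _ ab) // gerBl.
Qed.

Lemma disj_dec a b e : a <= b -> [disjoint `[a, b]%classic & C a b e].
Proof.
move=> ab; apply/eqP/seteqP; split => x // [] /=; rewrite /C /= !in_itv /= => /andP[h1 h2].
case=> /andP[h3 h4].
- by move: (lt_le_trans h4 h1); rewrite ltxx.
- by move: (lt_le_trans h3 h2); rewrite ltxx.
Qed.

Lemma leb_C a b e : a <= b -> 0 <= e -> lebesgue_measure (C a b e) = (e + e)%:E.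
Proof.
move=> ab e0; rewrite /C measureU //; last first.
  rewrite -subset0 => x [] /=; rewrite !in_itv /= => /andP[h1 h2] /andP[h3 h4].
  by move: (lt_trans h2 (le_lt_trans ab h3)); rewrite ltxx.
transitivity (lebesgue_measure `[(a - e)%R, a[%classic + lebesgue_measure `]b, (b + e)%R]%classic)%E; first by [].
rewrite !lebesgue_measure_itv /= !lte_fin.
have [e0'|] := ltP 0 e.
  rewrite gtrBl e0' ltrDl e0' /= -EFinD; congr (_%:E); lra.
move=> e0'; have -> : e = 0 by apply/le_anti; rewrite e0' e0.
rewrite subr0 addr0 ltxx /=.
by rewrite ltxx add0e addr0.
Qed.

Lemma mEF f D : measurable_fun [set: R] f -> measurable_fun D (EFin \o f).
Proof. by move=> mf; apply/measurable_EFinP; apply: measurable_funS mf. Qed.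

Lemma dm_dec f a b e : measurable_fun [set: R] f -> (forall x, 0 <= f x) ->
  a <= b -> 0 <= e ->
  dmeasure f `[a - e, b + e] = (dmeasure f `[a, b] + dmeasure f (C a b e))%E.
Proof.
move=> mf f0 ab e0; rewrite /dmeasure setE_dec // integral_setU //.
- exact: C_meas.
- exact: mEF.
- exact: disj_dec.
Qed.

Lemma dmC_le f a b e m : measurable_fun [set: R] f -> (forall x, 0 <= f x) ->
  a <= b -> 0 <= e -> 0 <= m ->
  (\forall x \ae lebesgue_measure, ((`|f x|)%:E <= m%:E)%E) ->
  (dmeasure f (C a b e) <= (m * (e + e))%:E)%E.
Proof.
move=> mf f0 ab e0 m0 ae.
apply: (@le_trans _ _ (\int[lebesgue_measure]_(x in C a b e) (cst m%:E x))%E).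
  apply: ae_ge0_le_integral => //.
  - exact: C_meas.
  - by move=> x _; rewrite lee_fin.
  - exact: mEF.
  - case: ae => N [mN N0 HN]; exists N; split => // x /= hx; apply: HN => /= hx2.
    by apply: hx => _; move: hx2; rewrite ger0_norm.
rewrite integral_cst; last exact: C_meas.
rewrite [X in (_ * X)%E](_ : _ = (e + e)%:E); last exact: leb_C.
by [].
Qed.

Lemma dmC_ge f a b e r : measurable_fun [set: R] f -> (forall x, 0 <= f x) ->
  a <= b -> 0 <= e -> 0 <= r ->
  (forall x, C a b e x -> r <= f x) ->
  ((r * (e + e))%:E <= dmeasure f (C a b e))%E.
Proof.
move=> mf f0 ab e0 r0 h.
apply: (@le_trans _ _ (\int[lebesgue_measure]_(x in C a b e) (cst r%:E x))%E).
  rewrite integral_cst; last exact: C_meas.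
  by rewrite [X in (_ <= _ * X)%E](_ : _ = (e + e)%:E); last exact: leb_C.
apply: ge0_le_integral => //.
- exact: C_meas.
- exact: mEF.
Qed.

Lemma dm_fin f a b : measurable_fun [set: R] f -> (forall x, 0 <= f x) ->
  (\int[lebesgue_measure]_(x in [set: R]) (f x)%:E = 1)%E ->
  dmeasure f `[a, b] \is a fin_num.
Proof.
move=> mf f0 f1; rewrite ge0_fin_numE; last by apply: integral_ge0 => x _; rewrite lee_fin.
apply: (@le_lt_trans _ _ 1%E); last exact: ltey.
rewrite -f1; apply: ge0_subset_integral => //.
- exact: mEF.
- by move=> x _; rewrite lee_fin.
Qed.

Lemma val_eq f a b e : measurable_fun [set: R] f -> (forall x, 0 <= f x) ->
  (\int[lebesgue_measure]_(x in [set: R]) (f x)%:E = 1)%E ->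
  a <= b -> 0 <= e ->
  (dmeasure f `[(a - e)%R, (b + e)%R] - dmeasure f `[a, b])%E = dmeasure f (C a b e).
Proof.
move=> mf f0 f1 ab e0; rewrite dm_dec // [X in (X - _)%E]addeC addeK //; exact: dm_fin.
Qed.

Lemma bm_le f a b m : measurable_fun [set: R] f -> (forall x, 0 <= f x) ->
  (\int[lebesgue_measure]_(x in [set: R]) (f x)%:E = 1)%E ->
  a <= b -> 0 <= m ->
  (\forall x \ae lebesgue_measure, ((`|f x|)%:E <= m%:E)%E) ->
  (boundary_measure f a b <= (2 * m)%:E)%E.
Proof.
move=> mf f0 f1 ab m0 ae; apply: ge_ereal_sup => _ [d /= d0 <-].
rewrite in_itv /= andbT in d0.
apply: ge_ereal_inf; exists ((dmeasure f `[(a - d / 2)%R, (b + d / 2)%R] - dmeasure f `[a, b])%E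
   * ((d / 2)^-1)%:E)%E.
  by exists (d / 2) => //=; rewrite in_itv /=; apply/andP; split; lra.
have e0 : 0 <= d / 2 by lra.
rewrite val_eq //.
apply: (@le_trans _ _ ((m * (d / 2 + d / 2))%:E * ((d / 2)^-1)%:E)%E).
  apply: lee_wpmul2r; first by rewrite lee_fin invr_ge0.
  exact: dmC_le.
rewrite -EFinM lee_fin.
have -> : m * (d / 2 + d / 2) * (d / 2)^-1 = 2 * m.
  by field; rewrite gt_eqF.
by [].
Qed.

Lemma bm_ge f a b r d : measurable_fun [set: R] f -> (forall x, 0 <= f x) ->
  (\int[lebesgue_measure]_(x in [set: R]) (f x)%:E = 1)%E ->
  a <= b -> 0 <= r -> 0 < d ->
  (forall x, a - d <= x <= b + d -> r <= f x) ->
  ((2 * r)%:E <= boundary_measure f a b)%E.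
Proof.
move=> mf f0 f1 ab r0 d0 h; apply: ereal_sup_ge.
eexists; first by exists d => //=; rewrite in_itv /= d0.
apply: le_ereal_inf_tmp => _ [e /= e0 <-].
rewrite in_itv /= in e0; case/andP: e0 => e0 ed.
rewrite val_eq //; last exact: ltW.
apply: (@le_trans _ _ ((r * (e + e))%:E * (e^-1)%:E)%E).
  rewrite -EFinM lee_fin.
  have -> : r * (e + e) * e^-1 = 2 * r by field; rewrite gt_eqF.
  by [].
apply: lee_wpmul2r; first by rewrite lee_fin invr_ge0 ltW.
apply: dmC_ge => //; first exact: ltW.
move=> x; rewrite /C /=; case; rewrite /= in_itv /= => /andP[h1 h2]; apply: h;
  apply/andP; split; lra.
Qed.

Lemma lebT_gt0 : (0 < lebesgue_measure [set: R])%E.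
Proof.
apply: (@lt_le_trans _ _ (lebesgue_measure `[0%R, 1%R]%classic)).
  by rewrite lebesgue_measure_itv /= lte_fin ltr01 sube0 lte01.
by apply: le_measure => //; rewrite inE.
Qed.

Lemma lc_between f x y r z : log_concave f -> 0 < r -> r < f x -> r < f y ->
  x < y -> x <= z <= y -> r <= f z.
Proof.
move=> lc r0 rx ry xy /andP[xz zy].
pose t := (y - z) / (y - x).
have t0 : 0 <= t by rewrite /t divr_ge0 // subr_ge0 // ltW.
have t1 : t <= 1 by rewrite /t ler_pdivrMr ?subr_gt0 // mul1r lerD2l lerN2.
have tz : t * x + (1 - t) * y = z by rewrite /t; field; rewrite subr_eq0 gt_eqF.
have [fz hl] := lc x y t (lt_trans r0 rx) (lt_trans r0 ry) (introT andP (conj t0 t1)).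
rewrite tz in fz hl.
have lx : ln r <= ln (f x) by rewrite ler_ln ?posrE ?ltW // (lt_trans r0).
have ly : ln r <= ln (f y) by rewrite ler_ln ?posrE ?ltW // (lt_trans r0).
have : ln r <= ln (f z) by nra.
by rewrite ler_ln ?posrE.
Qed.

End helpers.

Lemma key (R : realType) (f : R -> R) r : log_concave_prob_density f ->
  0 < r -> (r%:E < Linfty_norm f)%E -> ((2 * r)%:E <= Gamma f)%E.
Proof.
case=> mf f0 f1 lc r0 rM.
have [x [y [xy rx ry]]] : exists x y, [/\ x < y, r < f x & r < f y].
  apply: contrapT => nex.
  suff : (Linfty_norm f <= r%:E)%E by rewrite leNgt rM.
  apply/ess_supP.
  have [[x0 Px0]|nx] := pselect (exists x0, r < f x0).
  - exists [set x0]; split => //; first exact: lebesgue_measure_set1.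
    move=> z /= hz; apply/eqP/negPn/negP => zx0; apply: nex.
    have rz : r < f z by rewrite ltNge -lee_fin -(ger0_norm (f0 z)); apply/negP.
    have [zx|xz|e] := ltgtP z x0.
    + by exists z, x0.
    + by exists x0, z.
    + by move: zx0; rewrite e eqxx.
  - exists set0; split => // z /= hz; apply: nx; exists z.
    by rewrite ltNge -lee_fin -(ger0_norm (f0 z)); apply/negP.
pose d := (y - x) / 3.
have d0 : 0 < d by rewrite /d divr_gt0 // subr_gt0.
apply: (@le_trans _ _ (boundary_measure f (x + d) (y - d))).
  apply: (bm_ge (d := d)) => //; first by rewrite /d; lra.
    exact: ltW.
  move=> z hz; apply: (lc_between lc r0 rx ry xy).
  by move: hz; rewrite /d => /andP[h1 h2]; apply/andP; split; lra.
apply: ereal_sup_ge; exists (boundary_measure f (x + d) (y - d)) => //.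
by exists (x + d), (y - d); split => //; rewrite /d; lra.
Qed.

Theorem proposition5p8 (R : realType) (f : R -> R) :
  log_concave_prob_density f ->
  Gamma f = (2%:E * Linfty_norm f)%E.
Proof.
move=> H; have K := key H; case: H => mf f0 f1 lc.
have M0 : (0 <= Linfty_norm f)%E.
  by apply: ess_sup_ger; [exact: lebT_gt0 | move=> t; rewrite lee_fin].
have G0 : (0 <= Gamma f)%E.
  apply: (@le_trans _ _ (boundary_measure f 0 1)).
    have h := @bm_ge R f 0 1 0 1 mf f0 f1 ler01 (lexx 0) ltr01 (fun z _ => f0 z).
    by rewrite mulr0 in h.
  apply: ereal_sup_ge; exists (boundary_measure f 0 1) => //.
  by exists 0, 1; split => //; exact: ltr01.
apply/le_anti/andP; split.
- case EM : (Linfty_norm f) => [m| |]; last by rewrite EM in M0.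
  + apply: ge_ereal_sup => _ [a [b [ab ->]]].
    rewrite -EFinM; apply: bm_le => //; first exact: ltW.
      by rewrite -lee_fin -EM.
    by apply/ess_supP; move: EM; rewrite /Linfty_norm => ->.
  + by rewrite mulry gtr0_sg // mul1e leey.
- case EM : (Linfty_norm f) => [m| |]; last by rewrite EM in M0.
  + have m0 : 0 <= m by rewrite -lee_fin -EM.
    rewrite -EFinM.
    have [mle|mgt] := leP m 0.
      by apply: le_trans G0; rewrite lee_fin; nra.
    case EG : (Gamma f) => [g| |]; last by rewrite EG in G0.
    * have g0 : 0 <= g by rewrite -lee_fin -EG.
      rewrite lee_fin leNgt; apply/negP => gm.
      have h := K ((g / 2 + m) / 2); rewrite EG EM lte_fin lee_fin in h.
      have : 2 * ((g / 2 + m) / 2) <= g by apply: h; lra.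
      lra.
    * exact: leey.
  + case EG : (Gamma f) => [g| |]; last by rewrite EG in G0.
    * have g0 : 0 <= g by rewrite -lee_fin -EG.
      have h := K (g + 1)%R.
      rewrite EG lee_fin EM in h.
      have : 2 * (g + 1) <= g by apply: h; [lra | exact: ltry].
      by move=> hh; exfalso; clear -hh g0; lra.
    * exact: leey.
Qed.
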